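(* Let $T$ be a tree on $n$ vertices and let $u$ be a vertex of maximum degree in $T$. Suppose $u_1,u_2$ are two distinct neighbours of $u$ such that $u_1$ has exactly $d_1$ neighbours other than $u$, all of them pendant vertices, and $u_2$ has exactly $d_2$ neighbours other than $u$, all of them pendant vertices (so $T$ consists of a subtree $T_1$ containing $u$, together with the paths $u u_1$, $uu_2$ and the pendant vertices attached to $u_1$ and $u_2$). Let $w$ be a pendant neighbour of $u_2$ and let $T'=T-u_2w+u_1w$. If $d_1\geq d_2\geq 1$, then $e^{M_2}(T)<e^{M_2}(T')$.
   Context: For a tree $G$ with edge set $E(G)$ and vertex degrees $d_G(v)$, the exponential of the second Zagreb index is $e^{M_2}(G)=\sum_{uv\in E(G)} e^{d_G(u)d_G(v)}$. A pendant vertex is a vertex of degree 1. *)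

(* Defs.v *)
From HB Require Import structures.
From mathcomp Require Import all_boot all_order all_algebra.
From mathcomp Require Import reals sequences exp.
Set Implicit Arguments. Unset Strict Implicit. Unset Printing Implicit Defensive.
Import Order.TTheory GRing.Theory Num.Theory.

Section Graphs.
Variable V : finType.

Definition simple_edges (E : {set {set V}}) : Prop :=
  forall e, e \in E -> #|e| = 2.

Definition adj (E : {set {set V}}) : rel V :=
  fun x y => (x != y) && ([set x; y] \in E).

Definition deg (E : {set {set V}}) (v : V) : nat :=
  #|[set e in E | v \in e]|.

Definition connected (E : {set {set V}}) : Prop :=
  forall x y : V, connect (adj E) x y.

(* acyclic: no edge lies on a cycle, i.e. removing any edge {x,y}
   disconnects x from y *)
Definition acyclic (E : {set {set V}}) : Prop :=
  forall x y : V, x != y -> [set x; y] \in E ->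
    ~~ connect (adj (E :\ [set x; y])) x y.

Definition is_tree (E : {set {set V}}) : Prop :=
  [/\ simple_edges E, connected E & acyclic E].

(* exponential of the second Zagreb index:
   sum over edges uv of e^{d(u) d(v)}; for a 2-set e = {u,v} the product
   \prod_(v in e) deg v is d(u) d(v). *)
Definition eM2 (R : realType) (E : {set {set V}}) : R :=
  \sum_(e in E) expR ((\prod_(v in e) deg E v)%N)%:R.

End Graphs.

(* Main.v *)
Require Import Defs.
From mathcomp Require Import all_boot all_order all_algebra.
From mathcomp Require Import reals sequences exp.
From mathcomp Require Import lra zify.
Import Order.TTheory GRing.Theory Num.Theory.
Local Open Scope ring_scope.
Lemma deg_nbr (V : finType) (E : {set {set V}}) v :
  simple_edges E -> deg E v = #|[set x | adj E v x]|.
Proof.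
move=> sE; rewrite /deg.
have -> : [set e in E | v \in e] = (fun x => [set v; x]) @: [set x | adj E v x].
  apply/setP => e; rewrite inE; apply/andP/imsetP.
  - move=> [eE ve]; move: (sE e eE) => /eqP /cards2P [a [b [ab ee]]].
    move: ve; rewrite ee !inE => /orP [] /eqP ->.
    + by exists b; rewrite // inE /adj ab -ee eE.
    + exists a; last by rewrite setUC.
      by rewrite inE /adj eq_sym ab setUC -ee eE.
  - by move=> [x]; rewrite inE /adj => /andP [_ xE] ->; rewrite xE !inE eqxx.
rewrite card_in_imset // => x y; rewrite !inE /adj => /andP [vx _] /andP [vy _] exy.
have : x \in [set v; y] by rewrite -exy !inE eqxx orbT.
by rewrite !inE => /orP [] /eqP // xv; move: vx; rewrite xv eqxx.
Qed.
Lemma key (R : realType) (A a1 a2 : nat) : (1 <= A)%N -> (a2 <= a1)%N -> (a2 <= A)%N ->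
  a2%:R * expR ((a2*A)%N%:R) < expR ((A*a1.+1)%N%:R) - expR ((A*a1)%N%:R) :> R.
Proof.
move=> A1 h1 h2.
rewrite mulnS natrD expRD.
have hY : expR ((a2*A)%N%:R) <= expR ((A*a1)%N%:R) :> R.
  by rewrite ler_expR ler_nat mulnC leq_mul.
have hX : 0 < expR ((A*a1)%N%:R) :> R by apply: expR_gt0.
have hY0 : 0 < expR ((a2*A)%N%:R) :> R by apply: expR_gt0.
have he : 1 + A%:R < expR (A%:R) :> R.
  by apply: expR_gt1Dx; rewrite pnatr_eq0 -lt0n.
have ha : a2%:R <= A%:R :> R by rewrite ler_nat.
have ha0 : 0 <= a2%:R :> R by [].
set X := expR ((A*a1)%N%:R) in hY hX *.
set Y := expR ((a2*A)%N%:R) in hY hY0 *.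
set e := expR (A%:R) in he *.
have h3 : a2%:R * Y <= a2%:R * X by rewrite ler_wpM2l.
have h4 : a2%:R * X < (e - 1) * X by rewrite ltr_pM2r //; lra.
lra.
Qed.

Lemma adj_sym (V : finType) (E : {set {set V}}) x y : adj E x y = adj E y x.
Proof. by rewrite /adj eq_sym setUC. Qed.

Lemma edge_at (V : finType) (E : {set {set V}}) e z :
  simple_edges E -> e \in E -> z \in e -> exists y, y != z /\ e = [set z; y].
Proof.
move=> sE eE ze; move: (sE e eE) => /eqP /cards2P [a [b [ab ee]]].
move: ze; rewrite ee !inE => /orP [] /eqP ->.
- by exists b; rewrite eq_sym.
- by exists a; rewrite setUC.
Qed.

Lemma prod2 (V : finType) (f : V -> nat) x y : x != y ->
  (\prod_(v in [set x; y]) f v = f x * f y)%N.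
Proof.
move=> xy; rewrite big_setU1 /= ?big_set1 // inE //.
Qed.

Theorem lemma2 (R : realType) (V : finType) (n : nat) (E : {set {set V}})
    (u u1 u2 w : V) (d1 d2 : nat) :
  is_tree E ->
  #|V| = n ->
  (forall v : V, (deg E v <= deg E u)%N) ->
  u1 != u2 ->
  adj E u u1 -> adj E u u2 ->
  #|[set x | adj E u1 x & x != u]| = d1 ->
  (forall x, adj E u1 x -> x != u -> deg E x = 1%N) ->
  #|[set x | adj E u2 x & x != u]| = d2 ->
  (forall x, adj E u2 x -> x != u -> deg E x = 1%N) ->
  adj E u2 w -> deg E w = 1%N ->
  (d2 <= d1)%N -> (1 <= d2)%N ->
  eM2 R E < eM2 R ((E :\ [set u2; w]) :|: [set [set u1; w]]).
Proof.
move=> [sE _ _] _ hmax u12 auu1 auu2 hd1 _ hd2 _ au2w dw h12 hd2pos.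
set E' := (E :\ [set u2; w]) :|: [set [set u1; w]].
have degn : forall x, adj E x u -> #|[set y | adj E x y & y != u]| = (deg E x).-1.
  move=> x axu; rewrite (deg_nbr _ _ _ sE).
  have -> : [set y | adj E x y] = u |: [set y | adj E x y & y != u].
    apply/setP => y; rewrite !inE; have [->|yu] := eqVneq y u; by rewrite ?axu ?eqxx ?andbT.
  by rewrite cardsU1 !inE eqxx andbF.
have ha1 : deg E u1 = d1.+1.
  rewrite -hd1 degn ?prednK // 1?adj_sym //.
  rewrite (deg_nbr _ _ _ sE) card_gt0; apply/set0Pn; exists u; by rewrite inE adj_sym.
have ha2 : deg E u2 = d2.+1.
  rewrite -hd2 degn ?prednK // 1?adj_sym //.
  rewrite (deg_nbr _ _ _ sE) card_gt0; apply/set0Pn; exists u; by rewrite inE adj_sym.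
have uu1 : u != u1 by case/andP: auu1.
have uu2 : u != u2 by case/andP: auu2.
have u2w : u2 != w by case/andP: au2w.
have u1w : u1 != w.
  apply/eqP => e; move: dw; rewrite -e ha1 => [[]] d0; move: hd2pos h12; rewrite d0; lia.
have u1wE : [set u1; w] \notin E.
  apply/negP => h.
  have /cards1P [e0 he0] : #|[set e in E | w \in e]| == 1%N by rewrite -/(deg E w) dw.
  have i1 : [set u1; w] \in [set e in E | w \in e] by rewrite !inE h !eqxx orbT.
  have i2 : [set u2; w] \in [set e in E | w \in e].
    by rewrite !inE !eqxx orbT andbT; case/andP: au2w.
  rewrite he0 !inE in i1 i2; move/eqP: i2 => i2; move/eqP: i1.
  rewrite -i2 => i1.
  have : u1 \in [set u2; w] by rewrite -i1 !inE eqxx.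
  by rewrite !inE (negbTE u12) (negbTE u1w).
have inE' : forall e, e \in E -> u2 \notin e -> e \in E'.
  move=> e eE ne; rewrite !inE eE andbT; apply/orP; left.
  by apply: contraNneq ne => ->; rewrite !inE eqxx.
have mono : forall v, v != u2 -> (deg E v <= deg E' v)%N.
  move=> v vu2; have [->|vw] := eqVneq v w.
    rewrite dw card_gt0; apply/set0Pn; exists [set u1; w].
    by rewrite !inE !eqxx !orbT.
  apply: subset_leq_card; apply/subsetP => e; rewrite !inE => /andP [eE ve].
  rewrite ve eE /= ?andbT; apply/orP; left.
  by apply/negP => /eqP Hee; move: ve; rewrite Hee !inE (negbTE vu2) (negbTE vw).
have strict : (deg E u1 < deg E' u1)%N.
  apply: proper_card; apply/properP; split.
    apply/subsetP => f; rewrite !inE => /andP [fE vf].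
    rewrite vf fE /= ?andbT; apply/orP; left.
    by apply/negP => /eqP Hee; move: vf; rewrite Hee !inE (negbTE u12) (negbTE u1w).
  exists [set u1; w]; first by rewrite !inE !eqxx ?orbT.
  by rewrite !inE (negbTE u1wE).
set A := deg E u.
have uu1E : [set u; u1] \in E by case/andP: auu1.
have h1 : (1 <= A)%N by apply: leq_trans (hmax u1); rewrite ha1.
have h2 : (deg E u2 <= deg E u1)%N by rewrite ha1 ha2.
have := @key R _ _ _ h1 h2 (hmax u2); set a1 := deg E u1; set a2 := deg E u2 => hk.
rewrite /eM2 [X in X < _](bigID (fun e : {set V} => u2 \in e)) /=.
have B1 : \sum_(e | (e \in E) && (u2 \in e)) expR ((\prod_(v in e) deg E v)%N%:R)
           <= a2%:R * expR ((a2 * A)%N%:R) :> R.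
  apply: le_trans (_ : \sum_(e in [set e in E | u2 \in e]) expR ((a2 * A)%N%:R) <= _).
    rewrite [X in _ <= X](eq_bigl (fun e => (e \in E) && (u2 \in e))); last by move=> e; rewrite inE.
    apply: ler_sum => e /andP [eE ue]; rewrite ler_expR ler_nat.
    have [y [yu ->]] := edge_at _ _ _ _ sE eE ue; rewrite prod2 1?eq_sym //.
    by rewrite leq_mul.
  by rewrite sumr_const mulr_natl.
have B2 : \sum_(e | (e \in E) && (u2 \notin e)) expR ((\prod_(v in e) deg E' v)%N%:R)
          <= \sum_(e in E') expR ((\prod_(v in e) deg E' v)%N%:R) :> R.
  rewrite [X in _ <= X](bigID (fun e => (e \in E) && (u2 \notin e))) /=.
  rewrite [X in _ <= X + _](eq_bigl (fun e => (e \in E) && (u2 \notin e))).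
    by rewrite lerDl sumr_ge0 // => e _; apply: expR_ge0.
  move=> e; case h: ((e \in E) && (u2 \notin e)); last by rewrite andbF.
  by case/andP: h => eE ne; rewrite inE'.
have uu1n : u2 \notin [set u; u1] by rewrite !inE negb_or eq_sym uu2 eq_sym u12.
have B3 : \sum_(e | (e \in E) && (u2 \notin e)) expR ((\prod_(v in e) deg E v)%N%:R)
    + (expR ((A * a1.+1)%N%:R) - expR ((A * a1)%N%:R))
  <= \sum_(e | (e \in E) && (u2 \notin e)) expR ((\prod_(v in e) deg E' v)%N%:R) :> R.
  rewrite (bigD1 [set u; u1]) /=; last by rewrite uu1E uu1n.
  rewrite [X in _ <= X](bigD1 [set u; u1]) /=; last by rewrite uu1E uu1n.
  rewrite !prod2 //.
  have S : \sum_(i | ((i \in E) && (u2 \notin i)) && (i != [set u; u1])) expR ((\prod_(v in i) deg E v)%N%:R)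
     <= \sum_(i | ((i \in E) && (u2 \notin i)) && (i != [set u; u1])) expR ((\prod_(v in i) deg E' v)%N%:R) :> R.
    apply: ler_sum => e /andP [/andP [eE ne] _]; rewrite ler_expR ler_nat.
    apply: leq_prod => v ve; apply: mono; by apply: contraNneq ne => <-.
  have T : expR ((A * a1.+1)%N%:R) <= expR ((deg E' u * deg E' u1)%N%:R) :> R.
    by rewrite ler_expR ler_nat leq_mul // mono.
  lra.
lra.
Qed.
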